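(* Let $G_7=K_1+P_6$ be the graph obtained from the path $P_6$ on six vertices by adding one new vertex adjacent to all six vertices of the path. Then $G_7$ is outerplanar and $\chi_{\mathrm{so}}(G_7)=7$.
   Context: All graphs are finite, simple and undirected. A strong odd coloring of a graph $G$ is a proper vertex coloring of $G$ such that for every non-isolated vertex $v$ and every color $c$, either no vertex of the open neighborhood $N_G(v)$ has color $c$, or color $c$ is used on an odd number of vertices of $N_G(v)$. The strong odd chromatic number $\chi_{\mathrm{so}}(G)$ is the minimum number of colors in a strong odd coloring of $G$. A graph is outerplanar if it has a plane embedding in which all vertices lie on the boundary of a single face. *)

(* Defs.v *)
From mathcomp Require Import all_boot.
Set Implicit Arguments. Unset Strict Implicit. Unset Printing Implicit Defensive.

(* A finite simple graph is given by a vertex type T : finType and an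
   adjacency relation e : rel T (intended symmetric and irreflexive). *)

Definition nbhd (T : finType) (e : rel T) (v : T) : {set T} := [set u | e v u].

Definition non_isolated (T : finType) (e : rel T) (v : T) : bool := [exists u, e v u].

Definition strong_odd_coloring (T : finType) (e : rel T) (k : nat) (c : T -> 'I_k) : Prop :=
  (forall x y, e x y -> c x != c y) /\
  (forall v, non_isolated e v -> forall col : 'I_k,
     let n := #|[set u in nbhd e v | c u == col]| in (n == 0) || odd n).

Definition so_colorable (T : finType) (e : rel T) (k : nat) : Prop :=
  exists c : T -> 'I_k, strong_odd_coloring e c.

Definition chi_so_eq (T : finType) (e : rel T) (m : nat) : Prop :=
  so_colorable e m /\ forall k, so_colorable e k -> m <= k.

(* Outerplanarity, via the standard combinatorial description of an outerplane
   embedding: the vertices are placed in a cyclic order on a circle (the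
   boundary of the outer face) and the edges are drawn as chords inside it,
   no two of which cross.  pos gives the (injective) position of each vertex
   along the circle; two edges {a,b}, {c,d} cross iff their endpoints
   interleave: pos a < pos c < pos b < pos d. *)
Definition outerplanar (T : finType) (e : rel T) : Prop :=
  exists pos : T -> nat, injective pos /\
    forall a b c d, e a b -> e c d ->
      ~ (pos a < pos c /\ pos c < pos b /\ pos b < pos d).

(* G_7 = K_1 + P_6: vertices 0..5 form the path 0-1-2-3-4-5,
   vertex 6 is adjacent to all of them. *)
Definition G7 : rel 'I_7 :=
  fun i j => (i != j) &&
    [|| (val i == 6), (val j == 6), (val i).+1 == val j | (val j).+1 == val i].

(* Main.v *)
Require Import Defs.
From mathcomp Require Import all_boot.

Definition E7 : seq 'I_7 := [:: @Ordinal 7 0 isT; @Ordinal 7 1 isT; @Ordinal 7 2 isT;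
  @Ordinal 7 3 isT; @Ordinal 7 4 isT; @Ordinal 7 5 isT; @Ordinal 7 6 isT].
Lemma enumO : enum 'I_7 = E7.
Proof. by apply: (inj_map val_inj); rewrite val_enum_ord. Qed.
Lemma cardO (A : pred 'I_7) : #|A| = count A E7.
Proof. by rewrite cardE /enum_mem -enumT enumO size_filter. Qed.
Lemma cardOs (A : {set 'I_7}) : #|A| = count (fun u => u \in A) E7.
Proof. by rewrite cardE /enum_mem -enumT enumO size_filter. Qed.
Lemma memE7 (i : 'I_7) : i \in E7.
Proof. by rewrite -enumO mem_enum. Qed.

Definition posG (i : 'I_7) : nat := if val i == 6 then 0 else (val i).+1.
Lemma posG_inj_b : all (fun a => all (fun b => (posG a == posG b) ==> (a == b)) E7) E7.
Proof. by vm_compute. Qed.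
Lemma posG_cross_b : all (fun a => all (fun b => all (fun c => all (fun d =>
  G7 a b ==> G7 c d ==> ~~ [&& posG a < posG c, posG c < posG b & posG b < posG d]) E7) E7) E7) E7.
Proof. by vm_compute. Qed.

Definition goodP (P : pred 'I_7) : bool :=
  all (fun x => all (fun y => P x && P y ==> ~~ G7 x y) E7) E7 &&
  all (fun v => (count (fun u => G7 v u && P u) E7 == 0) || odd (count (fun u => G7 v u && P u) E7)) E7.
Lemma cls (P : pred 'I_7) : goodP P -> count P E7 <= 1.
Proof.
rewrite /goodP /=.
case: (P (@Ordinal 7 0 isT)); case: (P (@Ordinal 7 1 isT)); case: (P (@Ordinal 7 2 isT));
 case: (P (@Ordinal 7 3 isT)); case: (P (@Ordinal 7 4 isT)); case: (P (@Ordinal 7 5 isT));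
 case: (P (@Ordinal 7 6 isT)); by vm_compute.
Qed.

Lemma noniso (v : 'I_7) : non_isolated G7 v.
Proof.
apply/existsP; exists (if val v == 6 then @Ordinal 7 0 isT else @Ordinal 7 6 isT).
by case: v => [[|[|[|[|[|[|[|m]]]]]]] H].
Qed.

Theorem proposition3p2 : outerplanar G7 /\ chi_so_eq G7 7.
Proof.
split.
  exists posG; split.
    move=> a b /eqP H; apply/eqP.
    by move: posG_inj_b => /allP/(_ a (memE7 a))/allP/(_ b (memE7 b))/implyP; apply.
  move=> a b c d Hab Hcd [H1 [H2 H3]].
  move: posG_cross_b => /allP/(_ a (memE7 a))/allP/(_ b (memE7 b))
    /allP/(_ c (memE7 c))/allP/(_ d (memE7 d)).
  by rewrite Hab Hcd H1 H2 H3.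
split.
  exists id; split; first by move=> x y /andP [].
  move=> v _ col /=.
  have: #|[set u in nbhd G7 v | u == col]| <= 1.
    rewrite (leq_trans (subset_leq_card (_ : _ \subset [set col]))) ?cards1 //.
    by apply/subsetP => u; rewrite !inE => /andP [_ ->].
  by case: #|_| => [|[|]].
move=> k [c [Hp Ho]].
have inj : injective c.
  move=> i j Hij.
  pose P := fun u => c u == c i.
  have gP : goodP P.
    apply/andP; split.
      apply/allP => x _; apply/allP => y _; apply/implyP.
      move=> /andP [/eqP hx /eqP hy]; apply/negP => hxy.
      by move: (Hp x y hxy); rewrite hx hy eqxx.
    apply/allP => v _.
    move: (Ho v (noniso v) (c i)) => /=.
    by rewrite cardOs (@eq_count _ _ (fun u => G7 v u && P u)) // => u; rewrite !inE.
  have hA := @cls P gP.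
  apply/eqP; apply: contraLR hA => nij.
  have hs : [set i; j] \subset [set u | P u].
    by apply/subsetP => u; rewrite !inE /P => /orP [] /eqP -> //; rewrite Hij.
  move: (subset_leq_card hs); rewrite cards2 nij cardOs.
  rewrite (@eq_count _ _ P) => [h|u]; last by rewrite inE.
  by rewrite -ltnNge.
by move: (leq_card c inj); rewrite !card_ord.
Qed.
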